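(* Let $H$ be any graph obtained from $E_{20}$ by splitting a vertex. Then $H$ contains $K_{3,4}$ or $F_4$ as a minor.
   Context: $E_{20}$ is the graph with vertex set $\{e^0,e^1_1,e^1_2,e^1_3,e^2,e^3_1,e^3_2,e^3_3,e^4\}$ and the 16 edges $e^0e^2$; $e^0e^1_i$ ($i=1,2,3$); $e^1_1e^1_2$, $e^1_2e^1_3$, $e^1_3e^1_1$; and, for $i=1,2,3$, $e^1_ie^3_i$, $e^2e^3_i$, $e^4e^3_i$. $F_4$ is the graph with vertex set $\{f^1,f^2\}\cup\{f^i_j: i\in\{1,2\}, j\in\{1,2,3,4\}\}$ and the 16 edges: for each $i\in\{1,2\}$, $f^if^i_1$, $f^if^i_2$, $f^if^i_4$, $f^i_3f^i_1$, $f^i_3f^i_2$, $f^i_3f^i_4$; and $f^1_jf^2_{5-j}$ for $j=1,2,3,4$. Splitting a vertex $v$ of a graph $H$ means: delete $v$, add two new adjacent vertices $v_1,v_2$, and join each neighbour of $v$ to exactly one of $v_1,v_2$, so that each of $v_1,v_2$ is joined to at least two neighbours of $v$. *)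

(* Defs.v *)
(* Finite simple graphs as symmetric irreflexive relations on finTypes. *)
From mathcomp Require Import all_boot.
Set Implicit Arguments. Unset Strict Implicit. Unset Printing Implicit Defensive.

Definition connected_in (T : finType) (G : rel T) (S : {set T}) : Prop :=
  forall x y, x \in S -> y \in S ->
    connect [rel a b | [&& a \in S, b \in S & G a b]] x y.

Definition is_minor (T U : finType) (G : rel T) (H : rel U) : Prop :=
  exists phi : U -> {set T},
    [/\ forall u, phi u != set0,
        forall u, connected_in G (phi u),
        forall u u', u != u' -> [disjoint phi u & phi u'] &
        forall u u', H u u' -> exists x y, [/\ x \in phi u, y \in phi u' & G x y]].

Definition edge_rel (n : nat) (s : seq (nat * nat)) : rel 'I_n :=
  fun x y => ((nat_of_ord x, nat_of_ord y) \in s) || ((nat_of_ord y, nat_of_ord x) \in s).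

(* E_20, labelling: e^0=0, e^1_1=1, e^1_2=2, e^1_3=3, e^2=4,
   e^3_1=5, e^3_2=6, e^3_3=7, e^4=8 *)
Definition E20 : rel 'I_9 := @edge_rel 9
  [:: (0,4); (0,1); (0,2); (0,3); (1,2); (2,3); (3,1);
      (1,5); (2,6); (3,7); (4,5); (4,6); (4,7); (8,5); (8,6); (8,7)].

(* F_4, labelling: f^1=0, f^2=1, f^1_j = 1+j, f^2_j = 5+j (j=1..4) *)
Definition F4 : rel 'I_10 := @edge_rel 10
  [:: (0,2); (0,3); (0,5); (4,2); (4,3); (4,5);
      (1,6); (1,7); (1,9); (8,6); (8,7); (8,9);
      (2,9); (3,8); (4,7); (5,6)].

Definition K34 : rel 'I_7 := fun x y => (x < 3) != (y < 3).

(* Splitting vertex v of G: vertices are those of G other than v, plus two new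
   adjacent vertices (inr false) and (inr true); a neighbour x of v is joined to
   the new vertex (inr (side x)). *)
Definition split_vtx (T : finType) (v : T) : finType := ({x : T | x != v} + bool)%type.

Definition split_rel (T : finType) (G : rel T) (v : T) (side : T -> bool)
  : rel (split_vtx v) :=
  fun a b => match a, b with
  | inl x, inl y => G (val x) (val y)
  | inr b1, inr b2 => b1 != b2
  | inl x, inr c => G (val x) v && (side (val x) == c)
  | inr c, inl x => G (val x) v && (side (val x) == c)
  end.

Definition valid_split (T : finType) (G : rel T) (v : T) (side : T -> bool) : Prop :=
  forall c : bool, 2 <= #|[set x | G x v & side x == c]|.
Arguments split_rel {T} G v side.

(* Main.v *)
Require Import Defs.
From mathcomp Require Import all_boot.
Set Implicit Arguments. Unset Strict Implicit. Unset Printing Implicit Defensive.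
Definition E20l : seq (nat*nat) := [:: (0,4); (0,1); (0,2); (0,3); (1,2); (2,3); (3,1);
      (1,5); (2,6); (3,7); (4,5); (4,6); (4,7); (8,5); (8,6); (8,7)].
Definition F4l : seq (nat*nat) := [:: (0,2); (0,3); (0,5); (4,2); (4,3); (4,5);
      (1,6); (1,7); (1,9); (8,6); (8,7); (8,9);
      (2,9); (3,8); (4,7); (5,6)].
Definition adjn (s : seq (nat*nat)) (a b : nat) := ((a,b) \in s) || ((b,a) \in s).
Definition adjc (v : nat) (sb : seq bool) (a b : nat) : bool :=
  if (a < 9) && (b < 9) then adjn E20l a b
  else if a < 9 then adjn E20l a v && (nth false sb a == (b == 10))
  else if b < 9 then adjn E20l b v && (nth false sb b == (a == 10))
  else a != b.
Definition validcode (v a : nat) := (a < 11) && (a != v).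
Definition conn v sb (l : seq nat) := match l with [:: a] => true | [:: a; b] => adjc v sb a b | _ => false end.
Definition natcheck (n : nat) (Hn : nat -> nat -> bool) v sb (L : seq (seq nat)) :=
 [&& size L == n,
   all (fun l => all (validcode v) l && conn v sb l) L,
   all (fun u => all (fun u' => (u == u') || ~~ has (fun a => a \in nth [::] L u') (nth [::] L u)) (iota 0 n)) (iota 0 n) &
   all (fun u => all (fun u' => ~~ Hn u u' || has (fun a => has (adjc v sb a) (nth [::] L u')) (nth [::] L u)) (iota 0 n)) (iota 0 n)].
Definition K34n (a b : nat) := (a < 3) != (b < 3).
Fixpoint allbits n : seq (seq bool) := if n is n'.+1 then [seq b :: s | b <- [:: false; true], s <- allbits n'] else [:: [::]].
Definition nbits v (sb : seq bool) := [seq nth false sb i | i <- iota 0 9 & adjn E20l i v].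
Definition validn v sb := all (fun c => 2 <= count (fun i => adjn E20l i v && (nth false sb i == c)) (iota 0 9)) [:: false; true].
Definition table : seq ((nat * seq bool) * (bool * seq (seq nat))) := [::
  ((0, [:: false; false; true; true]), (false, [:: [:: 8]; [:: 9]; [:: 5]; [:: 7]; [:: 4]; [:: 6]; [:: 2]; [:: 10]; [:: 3]; [:: 1]]));
  ((0, [:: false; true; false; true]), (false, [:: [:: 8]; [:: 9]; [:: 5]; [:: 6]; [:: 4]; [:: 7]; [:: 3]; [:: 10]; [:: 2]; [:: 1]]));
  ((0, [:: false; true; true; false]), (false, [:: [:: 8]; [:: 10]; [:: 6]; [:: 5]; [:: 4]; [:: 7]; [:: 3]; [:: 9]; [:: 1]; [:: 2]]));
  ((0, [:: true; false; false; true]), (false, [:: [:: 8]; [:: 9]; [:: 6]; [:: 5]; [:: 4]; [:: 7]; [:: 3]; [:: 10]; [:: 1]; [:: 2]]));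
  ((0, [:: true; false; true; false]), (false, [:: [:: 8]; [:: 10]; [:: 5]; [:: 6]; [:: 4]; [:: 7]; [:: 3]; [:: 9]; [:: 2]; [:: 1]]));
  ((0, [:: true; true; false; false]), (false, [:: [:: 8]; [:: 10]; [:: 5]; [:: 7]; [:: 4]; [:: 6]; [:: 2]; [:: 9]; [:: 3]; [:: 1]]));
  ((1, [:: false; false; true; true]), (false, [:: [:: 8]; [:: 9]; [:: 5]; [:: 7]; [:: 4]; [:: 6]; [:: 2]; [:: 0]; [:: 3]; [:: 10]]));
  ((1, [:: false; true; false; true]), (false, [:: [:: 8]; [:: 9]; [:: 5]; [:: 6]; [:: 4]; [:: 7]; [:: 3]; [:: 0]; [:: 2]; [:: 10]]));
  ((1, [:: false; true; true; false]), (true, [:: [:: 2; 6]; [:: 3; 7]; [:: 5; 9]; [:: 0]; [:: 4]; [:: 8]; [:: 10]]));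
  ((1, [:: true; false; false; true]), (true, [:: [:: 2; 6]; [:: 3; 7]; [:: 5; 10]; [:: 0]; [:: 4]; [:: 8]; [:: 9]]));
  ((1, [:: true; false; true; false]), (false, [:: [:: 8]; [:: 10]; [:: 5]; [:: 6]; [:: 4]; [:: 7]; [:: 3]; [:: 0]; [:: 2]; [:: 9]]));
  ((1, [:: true; true; false; false]), (false, [:: [:: 8]; [:: 10]; [:: 5]; [:: 7]; [:: 4]; [:: 6]; [:: 2]; [:: 0]; [:: 3]; [:: 9]]));
  ((2, [:: false; false; true; true]), (false, [:: [:: 8]; [:: 9]; [:: 5]; [:: 7]; [:: 4]; [:: 6]; [:: 10]; [:: 0]; [:: 3]; [:: 1]]));
  ((2, [:: false; true; false; true]), (false, [:: [:: 8]; [:: 9]; [:: 6]; [:: 5]; [:: 4]; [:: 7]; [:: 3]; [:: 0]; [:: 1]; [:: 10]]));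
  ((2, [:: false; true; true; false]), (true, [:: [:: 1; 5]; [:: 3; 7]; [:: 6; 9]; [:: 0]; [:: 4]; [:: 8]; [:: 10]]));
  ((2, [:: true; false; false; true]), (true, [:: [:: 1; 5]; [:: 3; 7]; [:: 6; 10]; [:: 0]; [:: 4]; [:: 8]; [:: 9]]));
  ((2, [:: true; false; true; false]), (false, [:: [:: 8]; [:: 10]; [:: 6]; [:: 5]; [:: 4]; [:: 7]; [:: 3]; [:: 0]; [:: 1]; [:: 9]]));
  ((2, [:: true; true; false; false]), (false, [:: [:: 8]; [:: 10]; [:: 5]; [:: 7]; [:: 4]; [:: 6]; [:: 9]; [:: 0]; [:: 3]; [:: 1]]));
  ((3, [:: false; false; true; true]), (false, [:: [:: 8]; [:: 9]; [:: 5]; [:: 6]; [:: 4]; [:: 7]; [:: 10]; [:: 0]; [:: 2]; [:: 1]]));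
  ((3, [:: false; true; false; true]), (false, [:: [:: 8]; [:: 9]; [:: 6]; [:: 5]; [:: 4]; [:: 7]; [:: 10]; [:: 0]; [:: 1]; [:: 2]]));
  ((3, [:: false; true; true; false]), (true, [:: [:: 1; 5]; [:: 2; 6]; [:: 7; 9]; [:: 0]; [:: 4]; [:: 8]; [:: 10]]));
  ((3, [:: true; false; false; true]), (true, [:: [:: 1; 5]; [:: 2; 6]; [:: 7; 10]; [:: 0]; [:: 4]; [:: 8]; [:: 9]]));
  ((3, [:: true; false; true; false]), (false, [:: [:: 8]; [:: 10]; [:: 6]; [:: 5]; [:: 4]; [:: 7]; [:: 9]; [:: 0]; [:: 1]; [:: 2]]));
  ((3, [:: true; true; false; false]), (false, [:: [:: 8]; [:: 10]; [:: 5]; [:: 6]; [:: 4]; [:: 7]; [:: 9]; [:: 0]; [:: 2]; [:: 1]]));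
  ((4, [:: false; false; true; true]), (true, [:: [:: 2; 6]; [:: 3; 7]; [:: 5; 9]; [:: 0]; [:: 1]; [:: 8]; [:: 10]]));
  ((4, [:: false; true; false; true]), (true, [:: [:: 1; 5]; [:: 3; 7]; [:: 6; 9]; [:: 0]; [:: 2]; [:: 8]; [:: 10]]));
  ((4, [:: false; true; true; false]), (true, [:: [:: 1; 5]; [:: 2; 6]; [:: 7; 9]; [:: 0]; [:: 3]; [:: 8]; [:: 10]]));
  ((4, [:: true; false; false; true]), (true, [:: [:: 1; 5]; [:: 2; 6]; [:: 7; 10]; [:: 0]; [:: 3]; [:: 8]; [:: 9]]));
  ((4, [:: true; false; true; false]), (true, [:: [:: 1; 5]; [:: 3; 7]; [:: 6; 10]; [:: 0]; [:: 2]; [:: 8]; [:: 9]]));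
  ((4, [:: true; true; false; false]), (true, [:: [:: 2; 6]; [:: 3; 7]; [:: 5; 10]; [:: 0]; [:: 1]; [:: 8]; [:: 9]]))].
Definition lookup v sb := nth (true, [::]) [seq p.2 | p <- table & p.1 == (v, nbits v sb)] 0.
Definition okn v sb := let: (k, L) := lookup v sb in
  if k then natcheck 7 K34n v sb L else natcheck 10 (adjn F4l) v sb L.
Definition canon v sb := all (fun i => adjn E20l i v || ~~ nth false sb i) (iota 0 9).
Definition okall := all (fun v => all (fun sb => if canon v sb then (if validn v sb then okn v sb else true) else true) (allbits 9)) (iota 0 9).
Lemma tbl : okall.
Proof. by vm_compute. Qed.

Lemma adjn_sym s a b : adjn s a b = adjn s b a.
Proof. by rewrite /adjn orbC. Qed.

Lemma adjc_sym v sb a b : adjc v sb a b = adjc v sb b a.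
Proof.
rewrite /adjc andbC adjn_sym.
case: (b < 9); case: (a < 9) => //=; by rewrite eq_sym.
Qed.

Lemma mem_iota_ord n (u : 'I_n) : nat_of_ord u \in iota 0 n.
Proof. by rewrite mem_iota ltn_ord. Qed.

Section Transfer.
Variables (v : 'I_9) (side : 'I_9 -> bool) (sb : seq bool).
Hypothesis sbE : forall x : 'I_9, E20 x v -> side x = nth false sb x.

Definition code (a : split_vtx v) : nat :=
  match a with inl x => val (val x) | inr c => 9 + c end.

Lemma code_inj : injective code.
Proof.
move=> [x|c] [y|d] /=.
- by move=> h; congr inl; apply: val_inj; apply: val_inj.
- by move=> h; have := ltn_ord (val x); rewrite h ltnNge leq_addr.
- by move=> h; have := ltn_ord (val y); rewrite -h ltnNge leq_addr.
- by case: c; case: d.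
Qed.

Lemma code_valid a : validcode v (code a).
Proof.
case: a => [x|c] /=; rewrite /validcode.
- by rewrite (ltn_trans (ltn_ord (val x))) //= (valP x).
- by case: c; case: v => [[|[|[|[|[|[|[|[|[|[|]]]]]]]]]] ].
Qed.

Lemma code_lt9 a : (code a < 9) = (if a is inl _ then true else false).
Proof. by case: a => [x|c] /=; [rewrite ltn_ord | case: c]. Qed.

Lemma code_surj a : validcode v a -> exists x, code x = a.
Proof.
move=> /andP [a11 av].
case: (ltnP a 9) => a9.
  have H : (inord a : 'I_9) != v.
    apply: contra av => /eqP <-; by rewrite inordK.
  by exists (inl (exist _ (inord a) H)) => /=; rewrite inordK.
case: a a11 a9 av => [|[|[|[|[|[|[|[|[|[|[|a]]]]]]]]]]] //= _ _ _.
- by exists (inr false).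
- by exists (inr true).
Qed.

Lemma key a b : split_rel E20 v side a b = adjc (val v) sb (code a) (code b).
Proof.
rewrite /adjc !code_lt9.
case: a => [x|c]; case: b => [y|d] //=.
- have -> : adjn E20l (val x) v = E20 (val x) v by [].
  case E: (E20 (val x) v) => //=. rewrite sbE //. by case: d.
- have -> : adjn E20l (val y) v = E20 (val y) v by [].
  case E: (E20 (val y) v) => //=. rewrite sbE //. by case: c.
- by case: c; case: d.
Qed.

Lemma transfer n (H : rel 'I_n) (Hn : nat -> nat -> bool) (HnE : forall u u' : 'I_n, H u u' = Hn u u') L :
  natcheck n Hn (val v) sb L -> is_minor (split_rel E20 v side) H.
Proof.
case/and4P => /eqP sL /allP Lok /allP disj /allP edg.
have lok (u : 'I_n) : all (validcode v) (nth [::] L u) && conn (val v) sb (nth [::] L u).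
  by apply: Lok; apply: mem_nth; rewrite sL.
exists (fun u : 'I_n => [set a | code a \in nth [::] L u]); split.
- move=> u; have /andP [va cn] := lok u.
  case E: (nth [::] L u) va cn => [|a l] //= /andP [va _] _.
  have [x hx] := code_surj va.
  by apply/set0Pn; exists x; rewrite inE hx mem_head.
- move=> u x y; rewrite !inE => hx hy.
  have /andP [_ cn] := lok u.
  move: hx hy cn; case: (nth [::] L u) => [|a [|b [|c l]]] //=; rewrite ?inE.
  + move=> /eqP hx /eqP hy _; rewrite -hy in hx; rewrite (code_inj hx); exact: connect0.
  + move=> hx hy ab.
    case/orP: hx => /eqP hx; case/orP: hy => /eqP hy;
      try (rewrite -hy in hx; rewrite (code_inj hx); exact: connect0);
      apply: connect1; rewrite /= !inE hx hy !eqxx /= ?orbT key hx hy //.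
    by rewrite adjc_sym.
- move=> u u' uu'; rewrite -setI_eq0; apply/eqP/setP => x; rewrite !inE.
  have := disj u (mem_iota_ord u) => /allP /(_ u' (mem_iota_ord u')).
  rewrite (inj_eq val_inj) (negbTE uu') /=.
  apply: contraNF => /andP [h1 h2]; apply/hasP; by exists (code x).
- move=> u u' huu.
  have := edg u (mem_iota_ord u) => /allP /(_ u' (mem_iota_ord u')).
  rewrite -HnE huu /= => /hasP [a ha /hasP [b hb hab]].
  have /andP [/allP va _] := lok u; have /andP [/allP vb _] := lok u'.
  have [x hx] := code_surj (va _ ha); have [y hy] := code_surj (vb _ hb).
  by exists x, y; rewrite !inE hx hy ha hb key hx hy.
Qed.
End Transfer.
Lemma cnt (v : 'I_9) (side : 'I_9 -> bool) c :
  #|[set x | E20 x v & side x == c]| = count (fun i => adjn E20l i v && (side (inord i) == c)) (iota 0 9).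
Proof.
rewrite cardsE cardE size_filter -enumT -val_enum_ord count_map.
apply: eq_count => x /=. rewrite /preim /= inord_val. by [].
Qed.
Lemma allbitsP n (s : seq bool) : size s = n -> s \in allbits n.
Proof.
elim: n s => [|n IH] [|b s] // [hs].
apply: (@allpairs_f _ _ _ (fun b s => b :: s)); first by case: b.
exact: IH.
Qed.

Theorem lemma4p2 (v : 'I_9) (side : 'I_9 -> bool) :
  valid_split E20 v side ->
  is_minor (split_rel E20 v side) K34 \/ is_minor (split_rel E20 v side) F4.
Proof.
move=> hv.
set sb := [seq adjn E20l i v && side (inord i) | i <- iota 0 9].
have nthsb i : i < 9 -> nth false sb i = adjn E20l i v && side (inord i).
  by move=> hi; rewrite (nth_map 0) ?size_iota // nth_iota.
have sbE : forall x : 'I_9, E20 x v -> side x = nth false sb x.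
  move=> x hx; rewrite nthsb // inord_val.
  by have -> : adjn E20l x v = E20 x v by []; rewrite hx.
have hcan : canon v sb.
  apply/allP => i; rewrite mem_iota /= => hi; rewrite nthsb //.
  by case: (adjn E20l i v).
have hval : validn v sb.
  apply/allP => c _; have := hv c; rewrite cnt.
  congr (_ <= _); apply: eq_in_count => i; rewrite mem_iota /= => hi.
  rewrite nthsb //. by case: (adjn E20l i v).
have := tbl; rewrite /okall => /allP /(_ _ (mem_iota_ord v)) /allP.
have hsb : sb \in allbits 9 by apply: allbitsP; rewrite size_map size_iota.
move=> /(_ sb hsb); rewrite hcan hval.
rewrite /okn; case: (lookup v sb) => [[] L] hc.
- by left; apply: (transfer sbE (Hn := K34n)) hc.
- by right; apply: (transfer sbE (Hn := adjn F4l)) hc.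
Qed.
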